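(* For all integers $M,N,p\ge1$, $$\delta_p(M,N)=\sum_{s=1}^{M}\sum_{t=1}^{N}\delta_p^{st}(M,N).$$
   Context: $P(p)$ is the set of partitions of $\{1,\dots,p\}$, $|\pi|$ the number of blocks, and $S_{ps}=\#\{\pi\in P(p):|\pi|=s\}$ (Stirling numbers). For $\pi,\sigma\in P(p)$, write $\pi\triangleright\sigma$ if for every block $\beta$ of $\pi$ and every block $\gamma$ of $\sigma$, $\#\{x:x\in\beta,x\in\gamma\}=\#\{x:x\in\beta,x+1\in\gamma\}$, indices modulo $p$. For $1\le s,t\le p$ let $\varepsilon_p(s,t)=\frac{\#\{(\pi,\sigma)\in P(p)^2:\pi\triangleright\sigma,|\pi|=s,|\sigma|=t\}}{S_{ps}S_{pt}}$ (the probability that $\pi\triangleright\sigma$ for uniformly random $\pi,\sigma$ with $s$ and $t$ blocks). Set $\delta_p^{st}(M,N)=\frac{M!}{(M-s)!}\cdot\frac{S_{ps}}{M^p}\cdot\frac{N!}{(N-t)!}\cdot\frac{S_{pt}}{N^p}\cdot\varepsilon_p(s,t)$ for $1\le s\le\min(M,p)$, $1\le t\le\min(N,p)$, and $\delta_p^{st}(M,N)=0$ otherwise. Also $\delta_p(M,N)=\frac{1}{(MN)^p}\#\{(a,b)\in\mathbb Z_M^p\times\mathbb Z_N^p:\{(a_y,b_y)\}_{y=1}^p=\{(a_y,b_{y+1})\}_{y=1}^p\text{ as multisets}\}$, with $b_{p+1}=b_1$. *)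

(* Defs.v *)
(* Elements 1..p are modelled by 'I_p (0..p-1); x+1 mod p is ordS. *)
From mathcomp Require Import all_boot all_order all_algebra.
Set Implicit Arguments. Unset Strict Implicit. Unset Printing Implicit Defensive.
Import GRing.Theory Num.Theory.
Local Open Scope ring_scope.

Definition setpart (p : nat) (P : {set {set 'I_p}}) : bool := partition P [set: 'I_p].

Definition Sps (p s : nat) : nat :=
  #|[set P : {set {set 'I_p}} | setpart P & #|P| == s]|.

Definition rel_tri (p : nat) (pi sigma : {set {set 'I_p}}) : bool :=
  [forall beta in pi, forall gamma in sigma,
     #|[set x | (x \in beta) && (x \in gamma)]| ==
     #|[set x | (x \in beta) && (ordS x \in gamma)]| ].

Definition eps (p s t : nat) : rat :=
  (#|[set PS : {set {set 'I_p}} * {set {set 'I_p}} |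
        [&& setpart PS.1, setpart PS.2, rel_tri PS.1 PS.2,
            #|PS.1| == s & #|PS.2| == t]]|)%:R
  / ((Sps p s)%:R * (Sps p t)%:R).

Definition delta_st (p s t M N : nat) : rat :=
  if [&& (1 <= s)%N, (s <= minn M p)%N, (1 <= t)%N & (t <= minn N p)%N] then
    (M ^_ s)%:R * (Sps p s)%:R / (M ^ p)%:R *
    ((N ^_ t)%:R * (Sps p t)%:R / (N ^ p)%:R) * eps p s t
  else 0.

Definition good (p M N : nat) (ab : {ffun 'I_p -> 'I_M} * {ffun 'I_p -> 'I_N}) : bool :=
  perm_eq [seq (ab.1 y, ab.2 y) | y : 'I_p] [seq (ab.1 y, ab.2 (ordS y)) | y : 'I_p].

Definition delta (p M N : nat) : rat :=
  (#|[set ab | @good p M N ab]|)%:R / ((M * N) ^ p)%:R.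

(* Main.v *)
Require Import Defs.
From mathcomp Require Import all_boot all_order all_algebra.
Set Implicit Arguments. Unset Strict Implicit. Unset Printing Implicit Defensive.
From mathcomp Require Import ring.
Section Count.
Variables (T R : finType) (P : {set {set T}}).
Hypothesis HP : partition P [set: T].

Definition BT := {B : {set T} | B \in P}.

Lemma covP x : x \in cover P.
Proof. by rewrite (cover_partition HP) inE. Qed.

Definition blk x : BT := exist _ (pblock P x) (pblock_mem (covP x)).
Definition phi (g : {ffun BT -> R}) : {ffun T -> R} := [ffun x => g (blk x)].

Lemma blk_def (B : BT) x : x \in val B -> blk x = B.
Proof.
move=> xB; apply: val_inj => /=.
exact: def_pblock (partition_trivIset HP) (valP B) xB.
Qed.

Lemma B_ex (B : BT) : exists x, x \in val B.
Proof. exact: set0Pn (partition_neq0 HP (valP B)). Qed.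
Definition rep (B : BT) : T := xchoose (B_ex B).
Lemma B_ne (B : BT) : rep B \in val B.
Proof. exact: xchooseP. Qed.

Lemma phi_inj : injective phi.
Proof.
move=> g1 g2 E; apply/ffunP => B.
have := congr1 (fun f : {ffun T -> R} => f (rep B)) E; rewrite !ffunE.
by rewrite (blk_def (B_ne B)).
Qed.

Lemma part_eq (f : {ffun T -> R}) :
  (preim_partition f [set: T] == P) = (f \in phi @: [set g : {ffun BT -> R} | injectiveb g]).
Proof.
apply/idP/idP => [/eqP H | /imsetP [g]].
  apply/imsetP.
  have K x y : (y \in pblock P x) = (f x == f y).
    rewrite -H pblock_equivalence_partition ?inE //.
    by split=> // /eqP->.
  exists [ffun B : BT => f (rep B)].
    rewrite inE; apply/injectiveP => B1 B2; rewrite !ffunE => /eqP E.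
    have r1 := B_ne B1; have r2 := B_ne B2.
    rewrite -K in E.
    apply: val_inj.
    rewrite -(def_pblock (partition_trivIset HP) (valP B1) r1).
    rewrite -(def_pblock (partition_trivIset HP) (valP B2) r2).
    by rewrite (same_pblock (partition_trivIset HP) E).
  apply/ffunP => x; rewrite !ffunE /=; apply/eqP; rewrite -K.
  exact: B_ne (blk x).
rewrite inE => /injectiveP gi ->.
apply/eqP.
rewrite -{1}(preim_partition_pblock HP).
rewrite /preim_partition /equivalence_partition.
apply: eq_imset => x; apply/setP => y; rewrite !inE !ffunE (inj_eq gi).
by rewrite -val_eqE.
Qed.

Lemma count_part :
  #|[set f : {ffun T -> R} | preim_partition f [set: T] == P]| = #|R| ^_ #|P|.
Proof.
rewrite (eq_card (B := phi @: [set g : {ffun BT -> R} | injectiveb g])); last first.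
  by move=> f; rewrite inE part_eq.
rewrite card_imset; last exact: phi_inj.
by rewrite card_inj_ffuns card_sig; apply: congr1; apply: eq_card.
Qed.
End Count.
Lemma count_img (T : finType) (U : eqType) (F : T -> U) (q : pred U) :
  count q [seq F y | y : T] = #|[set y | q (F y)]|.
Proof.
rewrite count_map -sum1_count -sum1dep_card.
by rewrite /image_mem big_map; rewrite /index_enum; rewrite !unlock.
Qed.

Lemma good_tri p M N (a : {ffun 'I_p -> 'I_M}) (b : {ffun 'I_p -> 'I_N}) :
  good (a, b) = rel_tri (preim_partition a [set: 'I_p]) (preim_partition b [set: 'I_p]).
Proof.
rewrite /good /rel_tri /=.
apply/idP/idP.
- move/permP => H; apply/forall_inP => _ /imsetP [x _ ->].
  apply/forall_inP => _ /imsetP [x' _ ->].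
  have := H (pred1 (a x, b x')); rewrite !count_img => E.
  apply/eqP; etransitivity; [|etransitivity; [exact E|]];
    apply: eq_card => y; rewrite !inE xpair_eqE;
    by rewrite (eq_sym (a x)) (eq_sym (b x')).
- move/forall_inP => H; apply/allP => [[u v]] _; rewrite /= !count_img.
  case: (boolP [exists x, a x == u]) => [/existsP [x /eqP ax] | nx]; last first.
    have z1 : forall c : 'I_p -> 'I_p, #|[set y | pred1 (u, v) (a y, b (c y))]| = 0.
      move=> c; apply/eqP; rewrite cards_eq0; apply/eqP/setP => y; rewrite !inE xpair_eqE.
      apply/negbTE; apply: contra nx => /andP[/eqP <- _]; apply/existsP; exists y; done.
    by rewrite (z1 id) (z1 (@ordS p)).
  case: (boolP [exists x, b x == v]) => [/existsP [x' /eqP bx] | nx]; last first.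
    have z1 : forall c : 'I_p -> 'I_p, #|[set y | pred1 (u, v) (a y, b (c y))]| = 0.
      move=> c; apply/eqP; rewrite cards_eq0; apply/eqP/setP => y; rewrite !inE xpair_eqE.
      apply/negbTE; apply: contra nx => /andP[_ /eqP <-]; apply/existsP; exists (c y); done.
    by rewrite (z1 id) (z1 (@ordS p)).
  have hA : [set y in [set: 'I_p] | a x == a y] \in preim_partition a [set: 'I_p].
    by apply/imsetP; exists x.
  have hB : [set y in [set: 'I_p] | b x' == b y] \in preim_partition b [set: 'I_p].
    by apply/imsetP; exists x'.
  move: (H _ hA) => /forall_inP /(_ _ hB) /eqP E.
  subst u v; apply/eqP.
  etransitivity; [|etransitivity; [exact E|]];
    apply: eq_card => y; rewrite !inE xpair_eqE;
    by rewrite (eq_sym (a x)) (eq_sym (b x')).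
Qed.

Lemma card_pair (T1 T2 : finType) (Q : pred (T1 * T2)) :
  #|[set x | Q x]| = \sum_i \sum_j (Q (i, j) : nat).
Proof.
rewrite -sum1dep_card pair_big /= big_mkcond; apply: eq_bigr => [[i j]] _ /=.
by case: (Q _).
Qed.

Lemma sum_ind (g : nat -> nat) m k :
  \sum_(1 <= s < m.+1) g s * (k == s) = if (1 <= k <= m)%N then g k else 0.
Proof.
elim: m => [|m IH]; first by rewrite big_geq //; case: k => [|[]].
rewrite big_nat_recr //= IH.
case: (ltngtP k m.+1) => [lt|gt|->].
- by rewrite muln0 addn0 andbT -(ltnS k m) lt andbT.
- rewrite /= ?muln0 ?addn0 andbF; have /negbTE -> : ~~ (k <= m)%N.
    by rewrite -ltnNge ltnW.
  by rewrite andbF.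
- by rewrite muln1 ltnn andbF add0n.
Qed.

Lemma setpart_card p (P : {set {set 'I_p}}) : (1 <= p)%N -> setpart P ->
  (1 <= #|P| <= p)%N.
Proof.
move=> hp HP; apply/andP; split.
  rewrite lt0n cards_eq0; apply/eqP => E.
  have := cover_partition HP; rewrite E /cover big_set0 => /setP /(_ (Ordinal hp)).
  by rewrite !inE.
rewrite -[X in (_ <= X)%N]card_ord -cardsT (card_partition HP).
rewrite -sum1_card; apply: leq_sum => A HA.
by rewrite lt0n cards_eq0 (partition_neq0 HP HA).
Qed.

Definition Cst p s t := #|[set PS : {set {set 'I_p}} * {set {set 'I_p}} |
        [&& setpart PS.1, setpart PS.2, rel_tri PS.1 PS.2,
            #|PS.1| == s & #|PS.2| == t]]|.

Lemma sum_part p (R : finType) (F : {set {set 'I_p}} -> nat) :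
  \sum_(a : {ffun 'I_p -> R}) F (preim_partition a [set: 'I_p]) =
  \sum_(P | setpart P) #|R| ^_ #|P| * F P.
Proof.
rewrite (partition_big (fun a : {ffun 'I_p -> R} => preim_partition a [set: 'I_p])
          (fun P => setpart P)) /=; last by move=> a _; exact: preim_partitionP.
apply: eq_bigr => P HP.
rewrite (eq_bigr (fun _ => 1 * F P)); last by move=> a /eqP ->; rewrite mul1n.
rewrite -big_distrl /= sum1dep_card -(count_part R HP).
by congr (_ * _); apply: eq_card => a; rewrite !inE.
Qed.

Lemma main_nat p M N : (1 <= p)%N ->
  #|[set ab | @good p M N ab]| =
  \sum_(1 <= s < M.+1) \sum_(1 <= t < N.+1) M ^_ s * N ^_ t * Cst p s t.
Proof.
move=> hp.
rewrite card_pair.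
under eq_bigr => a _ do under eq_bigr => b _ do rewrite good_tri.
under eq_bigr => a _ do rewrite (sum_part _ (fun S => (rel_tri (preim_partition a [set: 'I_p]) S : nat))).
rewrite exchange_big /=.
under eq_bigr => S _ do rewrite (sum_part _ (fun P => #|'I_N| ^_ #|S| * (rel_tri P S : nat))).
rewrite exchange_big /= !card_ord.
symmetry.
under eq_bigr => s _ do under eq_bigr => t _ do rewrite /Cst card_pair big_distrr.
under eq_bigr => s _ do under eq_bigr => t _ do under eq_bigr => j _ do rewrite big_distrr.
under eq_bigr => s _ do rewrite exchange_big.
rewrite exchange_big.
under eq_bigr => j _ do under eq_bigr => s _ do rewrite exchange_big.
under eq_bigr => j _ do rewrite exchange_big.
rewrite [RHS]big_mkcond /=; apply: eq_bigr => j _.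
case Hj: (setpart j) => /=; last first.
  by apply: big1 => i _; apply: big1 => s _; apply: big1 => t _; rewrite ?muln0.
rewrite [RHS]big_mkcond /=; apply: eq_bigr => i _.
case Hi: (setpart i) => /=; last first.
  by apply: big1 => s _; apply: big1 => t _; rewrite ?muln0.
case Ht: (rel_tri j i) => /=; last first.
  by rewrite !muln0; apply: big1 => s _; apply: big1 => t _; rewrite ?muln0.
rewrite (eq_bigr (fun s => M ^_ s * (#|j| == s) * \sum_(1 <= t < N.+1) N ^_ t * (#|i| == t))); last first.
  move=> s _; rewrite big_distrr; apply: eq_bigr => t _ /=.
  by case: (_ == s); case: (_ == t); rewrite /= ?muln0 ?muln1 ?mul0n ?andbF.
rewrite -big_distrl /= !sum_ind.
have /andP[j1 jp] := setpart_card hp Hj; have /andP[i1 ip] := setpart_card hp Hi.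
rewrite j1 i1 /= muln1.
case: (leqP #|j| M) => hM; last by rewrite (ffact_small hM) !mul0n.
case: (leqP #|i| N) => hN; last by rewrite (ffact_small hN) !muln0.
by [].




Qed.

Local Open Scope ring_scope.
Import GRing.Theory Num.Theory.

Lemma foo (x y X Y C a b : rat) : a != 0 -> b != 0 ->
 X * a / x * (Y * b / y) * (C / (a * b)) = X * Y * C / (x * y).
Proof.
move=> ea eb.
rewrite !invfM.
transitivity (X * Y * C / x / y * (a / a) * (b / b)); first by ring.
by rewrite !mulfV // !mulr1 mulrA.
Qed.

Lemma Cst_big p s t : (1 <= p)%N -> (p < s)%N || (p < t)%N -> Cst p s t = 0%N.
Proof.
move=> hp H; apply/eqP; rewrite cards_eq0; apply/eqP/setP => -[P S].
rewrite !inE /=; apply/negbTE; apply/negP => /and5P[HP HS _ /eqP eP /eqP eS].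
have /andP[_ l1] := setpart_card hp HP; have /andP[_ l2] := setpart_card hp HS.
move: H; rewrite -eP -eS !ltnNge l1 l2; done.
Qed.

Lemma Sps_pos p s t : Cst p s t != 0%N -> (Sps p s != 0%N) && (Sps p t != 0%N).
Proof.
rewrite cards_eq0 => /set0Pn [[P S]]; rewrite inE /= => /and5P[HP HS _ /eqP eP /eqP eS].
apply/andP; split; rewrite /Sps cards_eq0; apply/set0Pn;
  [exists P | exists S]; rewrite inE ?HP ?HS ?eP ?eS eqxx. all: done.
Qed.

Lemma term p M N s t : (1 <= p)%N -> (1 <= M)%N -> (1 <= N)%N ->
  (1 <= s <= M)%N -> (1 <= t <= N)%N ->
  delta_st p s t M N = (M ^_ s * N ^_ t * Cst p s t)%:R / ((M * N) ^ p)%:R.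
Proof.
move=> hp hM hN /andP[s1 sM] /andP[t1 tN].
rewrite /delta_st /eps -/(Cst p s t).
case: ifP => cond.
  case C0: (Cst p s t == 0%N).
    by rewrite (eqP C0) mul0r mulr0 muln0 mul0r.
  have /andP[n1 n2] := Sps_pos (negbT C0).
  have m0 : (M%:R : rat) != 0 by rewrite pnatr_eq0 -lt0n.
  have k0 : (N%:R : rat) != 0 by rewrite pnatr_eq0 -lt0n.
  have e1 : ((Sps p s)%:R : rat) != 0 by rewrite pnatr_eq0.
  have e2 : ((Sps p t)%:R : rat) != 0 by rewrite pnatr_eq0.
  rewrite !natrM !natrX.
  rewrite natrM exprMn.
  have mp : (M%:R : rat) ^+ p != 0 by rewrite expf_neq0.
  have np : (N%:R : rat) ^+ p != 0 by rewrite expf_neq0.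
  move: e1 e2 mp np.
  move=> ea eb _ _.
  exact (foo (M%:R ^+ p) (N%:R ^+ p) ((M ^_ s)%:R) ((N ^_ t)%:R) ((Cst p s t)%:R) ea eb).
rewrite Cst_big ?muln0 ?mul0r //.
move: cond; rewrite !leq_min s1 t1 sM tN /=.
by case: (leqP s p); case: (leqP t p) => //= ->; rewrite orbT.
Qed.

Unset Implicit Arguments.

Theorem proposition7p3 (M N p : nat) :
  (1 <= M)%N -> (1 <= N)%N -> (1 <= p)%N ->
  delta p M N = \sum_(1 <= s < M.+1) \sum_(1 <= t < N.+1) delta_st p s t M N.
Proof.
move=> hM hN hp.
rewrite /delta main_nat // natr_sum mulr_suml.
apply: eq_big_nat => s /andP[s1 sM].
rewrite natr_sum mulr_suml.
apply: eq_big_nat => t /andP[t1 tN].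
rewrite (term hp hM hN) //.
- by rewrite s1.
- by rewrite t1.
Qed.
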